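(* Let $Y:=\frac12\sum_{i=1}^N\sum_{k=1}^n[X_{(i,k,1)},X_{(i,k,2)}]$, a continuous vector field on $\mathbb{R}^{nN}$. There exist $c,r>0$ such that $(Y\psi)(p)\leq -c\,\|\nabla\psi(p)\|^4$ for every $p\in\mathbb{R}^{nN}$ with $\psi(p)\leq r$.
   Context: $G=(V,E)$ is an undirected graph with $V=\{1,\ldots,N\}$ and nonempty edge set $E$ of two-element subsets (edges $ij$); $d_{ij}\geq0$ for $ij\in E$. For $p=(p_1,\ldots,p_N)\in\mathbb{R}^{nN}$: $\psi_i(p)=\frac14\sum_{j:\,ij\in E}(\|p_j-p_i\|^2-d_{ij}^2)^2$ and $\psi(p)=\frac14\sum_{ij\in E}(\|p_j-p_i\|^2-d_{ij}^2)^2$. For each $i$, $b_{i,1},\ldots,b_{i,n}$ is an orthonormal basis of $\mathbb{R}^n$; $B_{i,k}$ is the constant vector field on $\mathbb{R}^{nN}$ with $i$-th block $b_{i,k}$ and other blocks $0$. $X_{(i,k,\nu)}(p):=h_\nu(\psi_i(p))B_{i,k}(p)$; these vector fields are of class $C^1$, and $[X,Z](p)=\mathrm{D}Z(p)X(p)-\mathrm{D}X(p)Z(p)$ is the Lie bracket; $Y\psi(p)=\mathrm{D}\psi(p)Y(p)$. The functions $h_1,h_2:\mathbb{R}\to\mathbb{R}$ satisfy, for $\nu=1,2$: (i) $h_\nu(y)=0$ for $y\leq 0$; (ii) $h_\nu$ is bounded and of class $C^2$ on $(0,\infty)$; (iii) $h_\nu(y)/y$ remains bounded as $y\downarrow 0$;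 (iv) $h_\nu'(y)$ remains bounded as $y\downarrow0$; (v) $h_\nu''(y)\,y$ remains bounded as $y\downarrow 0$; (vi) there exist $r',c'>0$ with $h_2'(y)h_1(y)-h_1'(y)h_2(y)\leq -c'y$ for all $y\in(0,r']$. *)

(* Defs.v *)
From HB Require Import structures.
From mathcomp Require Import all_boot all_order all_algebra.
From mathcomp Require Import all_classical all_reals all_analysis.
Set Implicit Arguments. Unset Strict Implicit. Unset Printing Implicit Defensive.
Import Order.TTheory GRing.Theory Num.Theory.
Import numFieldNormedType.Exports.
Local Open Scope ring_scope.
Local Open Scope classical_set_scope.

(* Configurations p = (p_1,...,p_N) in R^{nN} are N x n matrices: row i is p_i.
   Vertices {1,...,N} are indexed by 'I_N. *)
Section Defs.
Variables (R : realType) (N n : nat).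
Notation conf := 'M[R]_(N, n).

Definition sqdist (p : conf) (i j : 'I_N) : R :=
  \sum_(k < n) (p j k - p i k) ^+ 2.

Variables (E : {set {set 'I_N}}) (d : {set 'I_N} -> R).

Definition edge_term (p : conf) (i j : 'I_N) : R :=
  (sqdist p i j - d [set i; j]%SET ^+ 2) ^+ 2.

Definition psi_i (i : 'I_N) (p : conf) : R :=
  4^-1 * \sum_(j : 'I_N | [set i; j]%SET \in E) edge_term p i j.

(* each edge {i,j} counted once, via i < j *)
Definition psi (p : conf) : R :=
  4^-1 * \sum_(i : 'I_N) \sum_(j : 'I_N | (i < j)%N && ([set i; j]%SET \in E))
     edge_term p i j.

(* orthonormal bases b i k (k < n) of R^n, one per vertex i *)
Variable b : 'I_N -> 'I_n -> 'rV[R]_n.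

Definition Bfield (i : 'I_N) (k : 'I_n) : conf :=
  \matrix_(i', m) (if i' == i then b i k 0 m else 0).

Definition Xfield (h : R -> R) (i : 'I_N) (k : 'I_n) (p : conf) : conf :=
  h (psi_i i p) *: Bfield i k.

Definition lie (X Z : conf -> conf) (p : conf) : conf :=
  'd Z p (X p) - 'd X p (Z p).

Definition Yfield (h1 h2 : R -> R) (p : conf) : conf :=
  2^-1 *: \sum_(i < N) \sum_(k < n) lie (Xfield h1 i k) (Xfield h2 i k) p.

Definition Ypsi (h1 h2 : R -> R) (p : conf) : R := 'd psi p (Yfield h1 h2 p).

Definition grad_sqnorm (p : conf) : R :=
  \sum_(i < N) \sum_(k < n) ('d psi p (delta_mx i k)) ^+ 2.

End Defs.

Definition admissible_h (R : realType) (h : R -> R) : Prop :=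
  (forall y, y <= 0 -> h y = 0) /\
  (exists M : R, forall y, `|h y| <= M) /\
  (forall x : R, 0 < x -> derivable h x 1) /\
  (forall x : R, 0 < x -> derivable (derive1 h) x 1) /\
  (forall x : R, 0 < x -> {for x, continuous (derive1n 2 h)}) /\
  (exists M delta : R, 0 < delta /\ forall y, 0 < y < delta -> `|h y / y| <= M) /\
  (exists M delta : R, 0 < delta /\ forall y, 0 < y < delta -> `|(derive1 h) y| <= M) /\
  (exists M delta : R, 0 < delta /\ forall y, 0 < y < delta -> `|(derive1n 2 h) y * y| <= M).

(* Main.v *)
Require Import Defs.
From HB Require Import structures.
From mathcomp Require Import all_boot all_order all_algebra.
From mathcomp Require Import all_classical all_reals all_analysis.
From mathcomp Require Import ring lra.
Import Order.TTheory GRing.Theory Num.Theory.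
Import numFieldNormedType.Exports.
Local Open Scope ring_scope.

Section D.
Context {R : realType} {V : normedModType R}.

Lemma isdD {f g df dg : V -> R} {x} : is_diff x f df -> is_diff x g dg ->
  is_diff x (fun y => f y + g y) (fun v => df v + dg v).
Proof. move=> Hf Hg; exact: (@is_diffD _ _ _ f g df dg x). Qed.

Lemma isdB {f g df dg : V -> R} {x} : is_diff x f df -> is_diff x g dg ->
  is_diff x (fun y => f y - g y) (fun v => df v - dg v).
Proof. move=> Hf Hg; exact: (@is_diffB _ _ _ f g df dg x). Qed.

Lemma isdM {f g df dg : V -> R} {x} : is_diff x f df -> is_diff x g dg ->
  is_diff x (fun y => f y * g y) (fun v => f x * dg v + g x * df v).
Proof. move=> Hf Hg; exact: (@is_diffM _ _ f g df dg x). Qed.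

Lemma isdC (c : R) x : is_diff x (fun _ : V => c) (fun _ => 0).
Proof. exact: (@is_diff_cst _ _ _ c x). Qed.

Lemma isdsum {I : Type} {r : seq I} {P : pred I} {f df : I -> V -> R} {x} :
  (forall i, is_diff x (f i) (df i)) ->
  is_diff x (fun y => \sum_(i <- r | P i) f i y) (fun v => \sum_(i <- r | P i) df i v).
Proof.
move=> H; elim: r => [|a r IH].
  under eq_fun do rewrite big_nil.
  have -> : (fun v : V => \sum_(i <- [::] | P i) df i v) = (fun _ => 0).
    by apply: funext => v; rewrite big_nil.
  exact: isdC.
under eq_fun do rewrite big_cons.
have -> : (fun v : V => \sum_(i <- a :: r | P i) df i v) =
   (fun v => if P a then df a v + \sum_(i <- r | P i) df i v else \sum_(i <- r | P i) df i v).
  by apply: funext => v; rewrite big_cons.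
case: (P a) => //; exact: isdD.
Qed.

Lemma isdMl (c : R) {f df : V -> R} {x} : is_diff x f df ->
  is_diff x (fun y => c * f y) (fun v => c * df v).
Proof.
move=> Hf; have := isdM (isdC c x) Hf.
have -> : (fun v : V => c * df v + f x * 0) = (fun v => c * df v).
  by apply: funext => v; rewrite mulr0 addr0.
by [].
Qed.

Lemma isdsq {f df : V -> R} {x} : is_diff x f df ->
  is_diff x (fun y => f y ^+ 2) (fun v => 2 * f x * df v).
Proof.
move=> Hf; have := isdM Hf Hf.
have -> : (fun v : V => f x * df v + f x * df v) = (fun v => 2 * f x * df v).
  by apply: funext => v; rewrite -mulrA mulr2n mulrDl !mul1r.
by under eq_fun do rewrite -expr2.
Qed.

End D.

Lemma isdcoord {R : realType} {m n : nat} (p : 'M[R]_(m, n)) i j :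
  is_diff p (fun q : 'M[R]_(m, n) => q i j) (fun v => v i j).
Proof.
have @f : {linear 'M[R]_(m, n) -> R}.
  by exists (fun N : 'M[R]_(_, _) => N i j); do 2![eexists]; do ?[constructor];
     rewrite ?mxE// => ? *; rewrite ?mxE//; move=> ?; rewrite !mxE.
rewrite (_ : (fun _ => _) = f) //.
apply: DiffDef; first exact/linear_differentiable/coord_continuous.
by rewrite diff_lin //; exact: coord_continuous.
Qed.

Lemma sym_sum (R : realType) (N : nat) (F : 'I_N -> 'I_N -> R) : (forall i, F i i = 0) ->
  \sum_(i < N) \sum_(j < N | (i < j)%N) (F i j + F j i) = \sum_(i < N) \sum_(j < N) F i j.
Proof.
move=> F0.
have H1 : forall i : 'I_N, \sum_(j < N) F i j =
   \sum_(j < N | (i < j)%N) F i j + \sum_(j < N | (j < i)%N) F i j.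
  move=> i; rewrite (bigID (fun j : 'I_N => (i < j)%N)) /=; congr (_ + _).
  rewrite (bigID (fun j : 'I_N => (j < i)%N)) /= [X in _ + X]big1 ?addr0.
    by apply: eq_bigl => j; case: ltngtP => //.
  move=> j /andP[]; case: ltngtP => // /ord_inj -> _ _; exact: F0.
under [RHS]eq_bigr do rewrite H1.
rewrite big_split /=.
under [LHS]eq_bigr do rewrite big_split /=.
rewrite big_split /=; congr (_ + _).
under eq_bigr do rewrite big_mkcond /=.
rewrite exchange_big /=; apply: eq_bigr => i _.
by rewrite [RHS]big_mkcond.
Qed.

Lemma sum_sq_le (R : realType) (N : nat) (u : 'I_N -> R) :
  (\sum_(i < N) u i) ^+ 2 <= N%:R * \sum_(i < N) u i ^+ 2.
Proof.
rewrite expr2 big_distrl /=.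
under eq_bigr do rewrite big_distrr /=.
apply: (@le_trans _ _ (\sum_(i < N) \sum_(j < N) 2^-1 * (u i ^+ 2 + u j ^+ 2))).
  apply: ler_sum => i _; apply: ler_sum => j _.
  have := sqr_ge0 (u i - u j); rewrite sqrrB => h.
  rewrite mulr2n in h.
  have -> : u i * u j = 2^-1 * (u i ^+ 2 + u j ^+ 2) - 2^-1 * (u i ^+ 2 - (u i * u j + u i * u j) + u j ^+ 2).
    by field.
  rewrite mulrDr lerBlDr lerDl; apply: mulr_ge0 => //; rewrite invr_ge0 //.
set Q := \sum_(i < N) u i ^+ 2.
have -> : \sum_(i < N) \sum_(j < N) 2^-1 * (u i ^+ 2 + u j ^+ 2) = 2^-1 * \sum_(i < N) (u i ^+ 2 *+ N + Q).
  rewrite mulr_sumr; apply: eq_bigr => i _.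
  by rewrite -mulr_sumr big_split /= sumr_const card_ord.
rewrite big_split /= sumr_const card_ord sumrMnl.
have HH : forall x : R, 2^-1 * (x *+ N + x *+ N) = N%:R * x.
  by move=> x; rewrite -[x *+ N]mulr_natl; field.
by rewrite HH.
Qed.

Lemma isd_eq (R : realType) (V : normedModType R) (f df dg : V -> R) x :
  is_diff x f df -> (forall v, df v = dg v) -> is_diff x f dg.
Proof. by move=> H e; have -> : dg = df by apply: funext => v; rewrite e. Qed.

Section P.
Variables (R : realType) (N n : nat) (E : {set {set 'I_N}}) (d : {set 'I_N} -> R).
Notation conf := 'M[R]_(N, n).

Definition ee (p : conf) i j := sqdist p i j - d [set i; j]%SET ^+ 2.
Definition dsq (p : conf) i j (v : conf) :=
  \sum_(k < n) 2 * (p j k - p i k) * (v j k - v i k).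

Lemma isd_sqdist (p : conf) i j : is_diff p (fun q => sqdist q i j) (dsq p i j).
Proof.
rewrite /sqdist /dsq.
apply: (@isdsum _ _ _ _ _ (fun k (q : conf) => (q j k - q i k) ^+ 2)
   (fun k (v : conf) => 2 * (p j k - p i k) * (v j k - v i k))) => k.
exact: (isdsq (isdB (isdcoord p j k) (isdcoord p i k))).
Qed.

Lemma isd_edge (p : conf) i j : is_diff p (fun q => edge_term d q i j)
  (fun v => 2 * ee p i j * dsq p i j v).
Proof.
rewrite /edge_term.
apply: isd_eq; first exact: (isdsq (isdB (isd_sqdist p i j) (isdC _ p))).
by move=> v /=; rewrite subr0.
Qed.

Definition dpsi_i (p : conf) i (v : conf) :=
  4^-1 * \sum_(j : 'I_N | [set i; j]%SET \in E) 2 * ee p i j * dsq p i j v.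

Lemma isd_psi_i (p : conf) i : is_diff p (psi_i E d i) (dpsi_i p i).
Proof.
rewrite /psi_i /dpsi_i.
apply: isdMl.
apply: (@isdsum _ _ _ _ _ (fun j (q : conf) => edge_term d q i j)
   (fun j (v : conf) => 2 * ee p i j * dsq p i j v)) => j.
exact: isd_edge.
Qed.

Definition dpsi (p : conf) (v : conf) :=
  4^-1 * \sum_(i : 'I_N) \sum_(j : 'I_N | (i < j)%N && ([set i; j]%SET \in E))
     2 * ee p i j * dsq p i j v.

Lemma isd_psi (p : conf) : is_diff p (psi E d) (dpsi p).
Proof.
rewrite /psi /dpsi.
apply: isdMl.
apply: (@isdsum _ _ _ _ _ (fun (i : 'I_N) (q : conf) => \sum_(j : 'I_N | (i < j)%N && ([set i; j]%SET \in E))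
     edge_term d q i j)
   (fun (i : 'I_N) (v : conf) => \sum_(j : 'I_N | (i < j)%N && ([set i; j]%SET \in E))
     2 * ee p i j * dsq p i j v)) => i.
apply: (@isdsum _ _ _ _ _ (fun j (q : conf) => edge_term d q i j)
   (fun j (v : conf) => 2 * ee p i j * dsq p i j v)) => j.
exact: isd_edge.
Qed.

End P.

Arguments ee {R N n} d p i j.
Arguments dsq {R N n} p i j v.
Arguments dpsi_i {R N n} E d p i v.
Arguments dpsi {R N n} E d p v.

Section Q.
Variables (R : realType) (N n : nat) (E : {set {set 'I_N}}) (d : {set 'I_N} -> R).
Hypothesis Hnot : forall i : 'I_N, [set i; i]%SET \notin E.
Notation conf := 'M[R]_(N, n).

Definition G (p : conf) i m := \sum_(j : 'I_N | [set i; j]%SET \in E) ee d p i j * (p i m - p j m).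

Lemma ee_sym (p : conf) i j : ee d p j i = ee d p i j.
Proof.
rewrite /ee /sqdist finset.setUC; congr (_ - _); apply: eq_bigr => k _.
by rewrite -sqrrN opprB.
Qed.

Lemma sumF_G (p v : conf) i :
  \sum_(j : 'I_N | [set i; j]%SET \in E) ee d p i j * \sum_(m < n) (p i m - p j m) * v i m
  = \sum_(m < n) G p i m * v i m.
Proof.
under eq_bigr do rewrite mulr_sumr.
rewrite exchange_big /=; apply: eq_bigr => m _.
by rewrite /G mulr_suml; apply: eq_bigr => j _; rewrite mulrA.
Qed.

Lemma dsq_split (p v : conf) i j : dsq p i j v =
  2 * (\sum_(m < n) (p i m - p j m) * v i m + \sum_(m < n) (p j m - p i m) * v j m).
Proof.
rewrite /dsq -big_split mulr_sumr; apply: eq_bigr => m _.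
rewrite /=; ring.
Qed.

Lemma dpsiE (p v : conf) : dpsi E d p v = \sum_(i < N) \sum_(m < n) G p i m * v i m.
Proof.
pose F i j := if [set i; j]%SET \in E then ee d p i j * \sum_(m < n) (p i m - p j m) * v i m else 0.
have st1 : dpsi E d p v = \sum_(i < N) \sum_(j < N | (i < j)%N) (F i j + F j i).
  rewrite /dpsi mulr_sumr; apply: eq_bigr => i _.
  rewrite big_mkcondr mulr_sumr; apply: eq_bigr => j _.
  rewrite /F finset.setUC; case: ifP => _; last by rewrite mulr0 addr0.
  rewrite ee_sym dsq_split; by field.
rewrite st1 sym_sum; last by move=> i; rewrite /F (negbTE (Hnot i)).
apply: eq_bigr => i _; rewrite -sumF_G /F.
by rewrite -big_mkcond.
Qed.

Lemma dpsi_iE (p v : conf) i : (forall j, j != i -> forall m, v j m = 0) ->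
  dpsi_i E d p i v = \sum_(m < n) G p i m * v i m.
Proof.
move=> Hv; rewrite /dpsi_i -sumF_G mulr_sumr; apply: eq_bigr => j Hj.
have jni : j != i by apply/eqP => ji; move: Hj; rewrite ji (negbTE (Hnot i)).
rewrite dsq_split.
have -> : \sum_(m < n) (p j m - p i m) * v j m = 0.
  by apply: big1 => m _; rewrite Hv // mulr0.
rewrite addr0; by field.
Qed.

End Q.
Arguments isd_psi_i {R N n} E d p i.
Arguments isd_psi {R N n} E d p.
Arguments G {R N n} E d p i m.
Arguments dpsiE {R N n E d} Hnot p v.
Arguments dpsi_iE {R N n E d} Hnot p v i.

Section L.
Variables (R : realType) (N n : nat) (E : {set {set 'I_N}}) (d : {set 'I_N} -> R).
Variable b : 'I_N -> 'I_n -> 'rV[R]_n.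
Hypothesis Hnot : forall i : 'I_N, [set i; i]%SET \notin E.
Notation conf := 'M[R]_(N, n).

Lemma scRE (a c : R) : a *: c = a * c. Proof. by []. Qed.

Lemma dX_pos (h : R -> R) i k (p : conf) :
  derivable h (psi_i E d i p) 1 -> forall v,
  'd (Xfield E d b h i k) p v = (derive1 h (psi_i E d i p) * 'd (psi_i E d i) p v) *: Bfield b i k.
Proof.
move=> dh v.
have dpi : differentiable (psi_i E d i) p by have [] := isd_psi_i E d p i.
have dh' : differentiable h (psi_i E d i p) by apply/derivable1_diffP.
have dk : differentiable (h \o psi_i E d i) p by apply: differentiable_comp.
rewrite /Xfield.
have -> : (fun p0 : conf => h (psi_i E d i p0) *: Bfield b i k) =
   (fun z => (h \o psi_i E d i) z *: Bfield b i k) by [].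
rewrite diffZl // diff_comp // /= deriv1E //=.
by rewrite mulrC.
Qed.

Lemma X_nonpos (h : R -> R) i k (p : conf) : (forall y, y <= 0 -> h y = 0) ->
  psi_i E d i p <= 0 -> Xfield E d b h i k p = 0.
Proof. by move=> h0 hp; rewrite /Xfield h0 // scale0r. Qed.

Definition beta (p : conf) i k := \sum_(m < n) G E d p i m * b i k 0 m.

Lemma Bfield_out i k j : j != i -> forall m, Bfield b i k j m = 0.
Proof. by move=> ji m; rewrite mxE (negbTE ji). Qed.

Lemma dpsi_i_B (p : conf) i k : 'd (psi_i E d i) p (Bfield b i k) = beta p i k.
Proof.
have [_ ->] := isd_psi_i E d p i.
rewrite (dpsi_iE Hnot); last exact: Bfield_out.
by apply: eq_bigr => m _; rewrite mxE eqxx.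
Qed.

Lemma dpsi_B (p : conf) i k : 'd (psi E d) p (Bfield b i k) = beta p i k.
Proof.
have [_ ->] := isd_psi E d p.
rewrite (dpsiE Hnot) (bigD1 i) //= [X in _ + X]big1 ?addr0.
  by apply: eq_bigr => m _; rewrite mxE eqxx.
move=> j ji; apply: big1 => m _; rewrite Bfield_out ?mulr0 //.
Qed.

Lemma dpsi_delta (p : conf) i k : 'd (psi E d) p (delta_mx i k) = G E d p i k.
Proof.
have [_ ->] := isd_psi E d p.
rewrite (dpsiE Hnot) (bigD1 i) //= [X in _ + X]big1 ?addr0.
  rewrite (bigD1 k) //= [X in _ + X]big1 ?addr0.
    by rewrite mxE !eqxx mulr1.
  by move=> m mk; rewrite mxE eqxx (negbTE mk) mulr0.
move=> j ji; apply: big1 => m _; rewrite mxE (negbTE ji) mulr0 //.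
Qed.

Definition gfun (h1 h2 : R -> R) y := derive1 h2 y * h1 y - derive1 h1 y * h2 y.

Lemma lieE (h1 h2 : R -> R) i k (p : conf) :
  (forall y, y <= 0 -> h1 y = 0) -> (forall y, y <= 0 -> h2 y = 0) ->
  (forall x, 0 < x -> derivable h1 x 1) -> (forall x, 0 < x -> derivable h2 x 1) ->
  lie (Xfield E d b h1 i k) (Xfield E d b h2 i k) p =
  (if 0 < psi_i E d i p then gfun h1 h2 (psi_i E d i p) * beta p i k else 0) *: Bfield b i k.
Proof.
move=> h10 h20 d1 d2; rewrite /lie.
case: ifP => hp.
  have A := dX_pos h2 i k p (d2 _ hp) (Xfield E d b h1 i k p).
  have B := dX_pos h1 i k p (d1 _ hp) (Xfield E d b h2 i k p).
  rewrite [X in X - _ = _]A [X in _ - X = _]B.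
  rewrite /Xfield !linearZ /= dpsi_i_B /gfun.
  apply/matrixP => x y; rewrite !mxE /= !scRE; ring.
rewrite !X_nonpos //; last 2 first.
- by rewrite leNgt hp.
- by rewrite leNgt hp.
have L0 : forall (f : conf -> conf), 'd f p 0 = 0 by move=> f; exact: linear0.
by rewrite [X in X - _ = _]L0 [X in _ - X = _]L0 subr0 scale0r.
Qed.

Lemma YpsiE (h1 h2 : R -> R) (p : conf) :
  (forall y, y <= 0 -> h1 y = 0) -> (forall y, y <= 0 -> h2 y = 0) ->
  (forall x, 0 < x -> derivable h1 x 1) -> (forall x, 0 < x -> derivable h2 x 1) ->
  Ypsi E d b h1 h2 p = 2^-1 * \sum_(i < N) \sum_(k < n)
    (if 0 < psi_i E d i p then gfun h1 h2 (psi_i E d i p) * beta p i k else 0) * beta p i k.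
Proof.
move=> h10 h20 d1 d2; rewrite /Ypsi /Yfield linearZ /= linear_sum /=; congr (_ * _).
apply: eq_bigr => i _; rewrite linear_sum /=; apply: eq_bigr => k _.
by rewrite lieE // linearZ /= dpsi_B.
Qed.

Lemma gradE (p : conf) : grad_sqnorm E d p = \sum_(i < N) \sum_(m < n) G E d p i m ^+ 2.
Proof.
by apply: eq_bigr => i _; apply: eq_bigr => m _; rewrite dpsi_delta.
Qed.

End L.
Arguments YpsiE {R N n E d b} Hnot h1 h2 p.
Arguments gradE {R N n E d} Hnot p.
Arguments beta {R N n} E d b p i k.
Arguments gfun {R} h1 h2 y.

Lemma ortho_sum (R : realType) (n : nat) (B : 'I_n -> 'I_n -> R)
  (hB : forall k l, \sum_(m < n) B k m * B l m = (k == l)%:R) (u : 'I_n -> R) :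
  \sum_(k < n) (\sum_(m < n) u m * B k m) ^+ 2 = \sum_(m < n) u m ^+ 2.
Proof.
have hC : forall m l, \sum_(k < n) B k m * B k l = (m == l)%:R.
  pose M : 'M[R]_n := \matrix_(k, m) B k m.
  have h1 : M *m M^T = 1%:M.
    apply/matrixP => k l; rewrite !mxE; under eq_bigr do rewrite !mxE; exact: hB.
  move=> m l; have := mulmx1C h1 => /matrixP /(_ m l); rewrite !mxE => <-.
  by apply: eq_bigr => k _; rewrite !mxE.
under eq_bigr do rewrite expr2 big_distrl /=.
under eq_bigr do under eq_bigr do rewrite big_distrr /=.
rewrite exchange_big /=; apply: eq_bigr => m _.
rewrite exchange_big /=.
have -> : \sum_(l < n) \sum_(k < n) u m * B k m * (u l * B k l) =
          \sum_(l < n) u m * u l * (m == l)%:R.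
  apply: eq_bigr => l _; rewrite -hC mulr_sumr; apply: eq_bigr => k _; ring.
rewrite (bigD1 m) //= [X in _ + X]big1 ?addr0; first by rewrite eqxx mulr1 expr2.
by move=> l lm; rewrite eq_sym (negbTE lm) mulr0.
Qed.

Section F.
Variables (R : realType) (N n : nat) (E : {set {set 'I_N}}) (d : {set 'I_N} -> R).
Hypothesis Hnot : forall i : 'I_N, [set i; i]%SET \notin E.
Notation conf := 'M[R]_(N, n).

Lemma psi_i_ge0 (p : conf) i : 0 <= psi_i E d i p.
Proof.
apply: mulr_ge0; first by rewrite invr_ge0.
by apply: sumr_ge0 => j _; exact: sqr_ge0.
Qed.

Lemma sum_psi_i (p : conf) : \sum_(i < N) psi_i E d i p = 2 * psi E d p.
Proof.
pose F i j := if [set i; j]%SET \in E then 4^-1 * edge_term d p i j else 0.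
have -> : \sum_(i < N) psi_i E d i p = \sum_(i < N) \sum_(j < N) F i j.
  apply: eq_bigr => i _; rewrite /psi_i mulr_sumr big_mkcond /=.
  by apply: eq_bigr => j _; rewrite /F; case: ifP; rewrite ?mulr0.
rewrite -sym_sum; last by move=> i; rewrite /F (negbTE (Hnot i)).
rewrite /psi mulr_sumr mulr_sumr; apply: eq_bigr => i _.
rewrite big_mkcondr /= !mulr_sumr; apply: eq_bigr => j _.
rewrite /F finset.setUC; case: ifP => _; last by rewrite !mulr0 addr0.
have -> : edge_term d p j i = edge_term d p i j.
  by rewrite /edge_term -/(ee d p j i) -/(ee d p i j) ee_sym.
ring.
Qed.

Lemma psi_i_le (p : conf) i : psi_i E d i p <= 2 * psi E d p.
Proof.
rewrite -sum_psi_i (bigD1 i) //= lerDl.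
by apply: sumr_ge0 => j _; exact: psi_i_ge0.
Qed.

Lemma ee_le (p : conf) i j : [set i; j]%SET \in E -> ee d p i j ^+ 2 <= 4 * psi_i E d i p.
Proof.
move=> hE; rewrite /psi_i mulrA mulfV ?mul1r //.
rewrite (bigD1 j) //= lerDl.
by apply: sumr_ge0 => l _; exact: sqr_ge0.
Qed.

Definition Dsum := \sum_(i < N) \sum_(j < N) d [set i; j]%SET ^+ 2.

Lemma D_le i j : d [set i; j]%SET ^+ 2 <= Dsum.
Proof.
rewrite /Dsum (bigD1 i) //= (bigD1 j) //= -addrA lerDl.
apply: addr_ge0; first by apply: sumr_ge0 => l _; exact: sqr_ge0.
by apply: sumr_ge0 => l _; apply: sumr_ge0 => l' _; exact: sqr_ge0.
Qed.

Lemma a_le (p : conf) i : psi_i E d i p <= 1 ->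
  \sum_(m < n) G E d p i m ^+ 2 <= 4 * N%:R * (2 + Dsum) * psi_i E d i p.
Proof.
move=> hpi.
have h1 : forall m, G E d p i m ^+ 2 <= N%:R * \sum_(j < N)
     (if [set i; j]%SET \in E then ee d p i j * (p i m - p j m) else 0) ^+ 2.
  move=> m; rewrite /G big_mkcond /=; exact: sum_sq_le.
apply: le_trans; first by apply: ler_sum => m _; exact: h1.
rewrite -mulr_sumr exchange_big /=.
have h2 : forall j, \sum_(m < n)
     (if [set i; j]%SET \in E then ee d p i j * (p i m - p j m) else 0) ^+ 2
     <= if [set i; j]%SET \in E then ee d p i j ^+ 2 * (2 + Dsum) else 0.
  move=> j; case: ifP => hE; last by rewrite big1 // => m _; rewrite expr0n.
  have -> : \sum_(m < n) (ee d p i j * (p i m - p j m)) ^+ 2 = ee d p i j ^+ 2 * sqdist p i j.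
    rewrite /sqdist mulr_sumr; apply: eq_bigr => m _; rewrite exprMn; congr (_ * _).
    by rewrite -sqrrN opprB.
  apply: ler_wpM2l; first exact: sqr_ge0.
  have hee : ee d p i j ^+ 2 <= 4 by apply: le_trans (ee_le p i j hE) _; lra.
  have hee2 : ee d p i j <= 2 by nra.
  have := D_le i j; rewrite /ee in hee2; lra.
apply: le_trans.
  apply: ler_wpM2l; first by rewrite ler0n.
  apply: ler_sum => j _; exact: h2.
rewrite -big_mkcond /= -mulr_suml.
have -> : \sum_(j < N | [set i; j]%SET \in E) ee d p i j ^+ 2 = 4 * psi_i E d i p.
  by rewrite /psi_i mulrA mulfV ?mul1r.
have : 0 <= psi_i E d i p by exact: psi_i_ge0.
have : 0 <= Dsum by apply: sumr_ge0 => l _; apply: sumr_ge0 => l' _; exact: sqr_ge0.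
move=> *; rewrite le_eqVlt; apply/orP; left; apply/eqP; ring.
Qed.

End F.
Arguments psi_i_le {R N n E d} Hnot p i.
Arguments a_le {R N n E d} p i.
Arguments psi_i_ge0 {R N n E d} p i.

Lemma pointwise_bound (R : realType) (K c' g y a : R) :
  0 < K -> 0 < c' -> 0 <= y -> 0 <= a -> a <= K * y ->
  (0 < y -> g <= - c' * y) ->
  (if 0 < y then g else 0) * a <= - (c' / K) * a ^+ 2.
Proof.
move=> K0 c0 y0 a0 aK hg.
case: ifP => hy.
  apply: (@le_trans _ _ (- c' * y * a)); first by apply: ler_wpM2r => //; exact: hg.
  have h1 : a * a <= K * y * a by apply: ler_wpM2r.
  have h2 : c' / K * (a * a) <= c' / K * (K * y * a).
    by apply: ler_wpM2l => //; apply: divr_ge0; apply: ltW.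
  have e : c' / K * (K * y * a) = c' * y * a by field; apply/eqP => K00; move: K0; rewrite K00 ltxx.
  rewrite e in h2; rewrite expr2; lra.
have y00 : y = 0 by apply/le_anti; rewrite y0 leNgt hy.
have a00 : a = 0 by apply/le_anti; rewrite a0 andbT; move: aK; rewrite y00 mulr0.
by rewrite a00 mul0r expr0n /= mulr0.
Qed.

Theorem lemma5p3 (R : realType) (N n : nat)
  (E : {set {set 'I_N}}) (d : {set 'I_N} -> R)
  (b : 'I_N -> 'I_n -> 'rV[R]_n) (h1 h2 : R -> R) :
  E != finset.set0 ->
  (forall e, e \in E -> #|e| = 2%N) ->
  (forall e, e \in E -> 0 <= d e) ->
  (forall (i : 'I_N) (k l : 'I_n),
      \sum_(m < n) b i k 0 m * b i l 0 m = (k == l)%:R) ->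
  admissible_h h1 -> admissible_h h2 ->
  (exists r' c' : R, 0 < r' /\ 0 < c' /\
     forall y, 0 < y <= r' ->
       derive1 h2 y * h1 y - derive1 h1 y * h2 y <= - c' * y) ->
  exists c r : R, 0 < c /\ 0 < r /\
    forall p : 'M[R]_(N, n), psi E d p <= r ->
      Ypsi E d b h1 h2 p <= - c * (grad_sqnorm E d p) ^+ 2.
Proof.
move=> _ Hcard _ Hb [h10 [_ [dh1 _]]] [h20 [_ [dh2 _]]] [r' [c' [r'0 [c'0 Hg]]]].
have Hnot : forall i : 'I_N, [set i; i]%SET \notin E.
  by move=> i; apply/negP => /Hcard; rewrite finset.setUid cards1.
set D := @Dsum R N d.
have D0 : 0 <= D by apply: sumr_ge0 => l _; apply: sumr_ge0 => l' _; exact: sqr_ge0.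
set K := 4 * N%:R * (2 + D) + 1.
have K0 : 0 < K.
  rewrite /K; apply: (@lt_le_trans _ _ (0 + 1)); first by rewrite add0r.
  rewrite lerD2r; apply: mulr_ge0; first by apply: mulr_ge0 => //; rewrite ler0n.
  by apply: addr_ge0.
set M := (N.+1)%:R : R.
have M0 : 0 < M by rewrite /M ltr0n.
exists (c' / K / 2 / M), (Num.min (2^-1) (r' / 2)).
split; first by apply: divr_gt0 => //; apply: divr_gt0 => //; apply: divr_gt0.
split; first by rewrite lt_min; apply/andP; split => //; apply: divr_gt0.
move=> p; rewrite le_min => /andP [hp1 hp2].
rewrite (YpsiE Hnot) // gradE //.
set a := fun i => \sum_(m < n) G E d p i m ^+ 2.
have ha : forall i : 'I_N, \sum_(k < n) (if 0 < psi_i E d i p then gfun h1 h2 (psi_i E d i p) * beta E d b p i k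
     else 0) * beta E d b p i k = (if 0 < psi_i E d i p then gfun h1 h2 (psi_i E d i p) else 0) * a i.
  move=> i; rewrite /a -(@ortho_sum R n (fun k m => b i k 0 m) (Hb i) (G E d p i)).
  case: ifP => _; last by rewrite mul0r big1 // => k _; rewrite mul0r.
  rewrite mulr_sumr; apply: eq_bigr => k _; rewrite /beta; ring.
under eq_bigr do rewrite ha.
have hb : forall i : 'I_N, (if 0 < psi_i E d i p then gfun h1 h2 (psi_i E d i p) else 0) * a i
     <= - (c' / K) * a i ^+ 2.
  move=> i; apply: pointwise_bound => //.
  - exact: psi_i_ge0.
  - by apply: sumr_ge0 => m _; exact: sqr_ge0.
  - have hpi := psi_i_le (d := d) Hnot p i.
    apply: (@le_trans _ _ (4 * N%:R * (2 + D) * psi_i E d i p)).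
      by apply: a_le => //; lra.
    apply: ler_wpM2r; [exact: psi_i_ge0 | by rewrite /K lerDl].
  - move=> hy; apply: Hg; rewrite hy /=.
    have hpi := psi_i_le (d := d) Hnot p i; lra.
have hs := sum_sq_le R N a.
set S := \sum_(i < N) a i in hs *.
set Q := \sum_(i < N) a i ^+ 2 in hs *.
have Q0 : 0 <= Q by apply: sumr_ge0 => i _; exact: sqr_ge0.
have hs' : S ^+ 2 <= M * Q.
  apply: le_trans hs _; apply: ler_wpM2r => //; rewrite /M ler_nat; exact: leqnSn.
apply: (@le_trans _ _ (2^-1 * (- (c' / K) * Q))).
  apply: ler_wpM2l; first by rewrite invr_ge0.
  rewrite /Q mulr_sumr; apply: ler_sum => i _; exact: hb.
have Kn : K != 0 by rewrite gt_eqF.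
have Mn : M != 0 by rewrite gt_eqF.
have e : - (c' / K / 2 / M) * S ^+ 2 = 2^-1 * (- (c' / K) * (M^-1 * S ^+ 2)).
  by field; rewrite Kn andbT -mulrS.
rewrite e; apply: ler_wpM2l; first by rewrite invr_ge0.
rewrite !mulNr lerN2; apply: ler_wpM2l.
  by apply: divr_ge0; apply: ltW.
by rewrite ler_pdivrMl.
Qed.
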